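(* Let $\mathcal{C},\mathcal{D}$ be fibration categories and $F\colon\mathcal{C}\rightleftarrows\mathcal{D}\colon G$ an adjoint pair ($F\dashv G$) of exact functors. If two morphisms $f,g\colon A\to GB$ are homotopic in $\mathcal{C}$, then their adjoint transposes $\overline{f},\overline{g}\colon FA\to B$ are homotopic in $\mathcal{D}$.
   Context: A fibration category is a category with wide subcategories of fibrations and weak equivalences such that: weak equivalences satisfy 2-out-of-6; isomorphisms are acyclic fibrations; pullbacks along fibrations exist and fibrations and acyclic fibrations are stable under pullback; there is a terminal object and all objects are fibrant; every map factors as a weak equivalence followed by a fibration. An exact functor preserves fibrations, acyclic fibrations, pullbacks along fibrations and the terminal object. Two morphisms are homotopic if they become equal in the homotopy category $\mathrm{Ho}\,\mathcal{C}$ (the localization at the weak equivalences). *)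

(* Defs.v *)
Set Implicit Arguments.
Unset Strict Implicit.

Record Category := {
  Ob :> Type;
  Hom : Ob -> Ob -> Type;
  idm : forall A, Hom A A;
  comp : forall A B C, Hom B C -> Hom A B -> Hom A C;
  comp_idl : forall A B (f : Hom A B), comp (idm B) f = f;
  comp_idr : forall A B (f : Hom A B), comp f (idm A) = f;
  comp_assoc : forall A B C D (f : Hom A B) (g : Hom B C) (h : Hom C D),
      comp h (comp g f) = comp (comp h g) f
}.
Arguments Hom {c} _ _.
Arguments idm {c} _.
Arguments comp {c A B C} _ _.

Definition is_iso (C : Category) (A B : C) (f : Hom A B) : Prop :=
  exists g : Hom B A, comp g f = idm A /\ comp f g = idm B.

Definition is_terminal (C : Category) (T : C) : Prop :=
  forall X : C, exists u : Hom X T, forall v : Hom X T, v = u.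

Definition is_pullback (C : Category) (P X Y Z : C)
  (p1 : Hom P X) (p2 : Hom P Y) (f : Hom X Z) (g : Hom Y Z) : Prop :=
  comp f p1 = comp g p2 /\
  forall (Q : C) (a : Hom Q X) (b : Hom Q Y), comp f a = comp g b ->
    exists u : Hom Q P, (comp p1 u = a /\ comp p2 u = b) /\
      forall v : Hom Q P, comp p1 v = a /\ comp p2 v = b -> v = u.

Record Functor (C D : Category) := {
  fobj :> C -> D;
  fmap : forall A B : C, Hom A B -> Hom (fobj A) (fobj B);
  fmap_id : forall A : C, fmap (idm A) = idm (fobj A);
  fmap_comp : forall (A B E : C) (f : Hom A B) (g : Hom B E),
      fmap (comp g f) = comp (fmap g) (fmap f)
}.
Arguments fmap {C D} _ {A B} _.

(** * Adjunctions  F -| G, given by natural bijections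
    Hom_D (F A, B) ~ Hom_C (A, G B). [transp] sends f : A -> G B to its
    adjoint transpose  F A -> B. *)
Record Adjunction (C D : Category) (F : Functor C D) (G : Functor D C) := {
  transp : forall (A : C) (B : D), Hom A (G B) -> Hom (F A) B;
  untransp : forall (A : C) (B : D), Hom (F A) B -> Hom A (G B);
  transpK : forall A B (f : Hom A (G B)), untransp (transp f) = f;
  untranspK : forall A B (h : Hom (F A) B), transp (untransp h) = h;
  untransp_natural : forall (A' A : C) (B B' : D)
      (a : Hom A' A) (h : Hom (F A) B) (k : Hom B B'),
      untransp (comp k (comp h (fmap F a))) = comp (fmap G k) (comp (untransp h) a)
}.
Arguments transp {C D F G} _ {A B} _.

Record FibCat := {
  fc_cat :> Category;
  fib : forall A B : fc_cat, Hom A B -> Prop;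
  we : forall A B : fc_cat, Hom A B -> Prop;
  term : fc_cat;
  fib_id : forall A, fib (idm A);
  fib_comp : forall A B E (f : Hom A B) (g : Hom B E), fib f -> fib g -> fib (comp g f);
  we_id : forall A, we (idm A);
  we_comp : forall A B E (f : Hom A B) (g : Hom B E), we f -> we g -> we (comp g f);
  we_2of6 : forall W X Y Z (f : Hom W X) (g : Hom X Y) (h : Hom Y Z),
      we (comp g f) -> we (comp h g) ->
      we f /\ we g /\ we h /\ we (comp h (comp g f));
  iso_acyclic_fib : forall A B (f : Hom A B), is_iso f -> fib f /\ we f;
  pullback_exists : forall X Y Z (p : Hom X Z) (g : Hom Y Z), fib p ->
      exists (P : fc_cat) (p1 : Hom P X) (p2 : Hom P Y), is_pullback p1 p2 p g;
  fib_pullback : forall P X Y Z (p1 : Hom P X) (p2 : Hom P Y) (p : Hom X Z) (g : Hom Y Z),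
      is_pullback p1 p2 p g -> fib p -> fib p2;
  acyclic_fib_pullback : forall P X Y Z (p1 : Hom P X) (p2 : Hom P Y) (p : Hom X Z) (g : Hom Y Z),
      is_pullback p1 p2 p g -> fib p -> we p -> fib p2 /\ we p2;
  term_terminal : is_terminal term;
  all_fibrant : forall X (u : Hom X term), fib u;
  factorization : forall X Y (f : Hom X Y),
      exists (Z : fc_cat) (w : Hom X Z) (p : Hom Z Y), we w /\ fib p /\ comp p w = f
}.
Arguments fib {_ A B} _.
Arguments we {_ A B} _.

Definition exact (C D : FibCat) (F : Functor C D) : Prop :=
  (forall A B (f : Hom A B), fib f -> fib (fmap F f)) /\
  (forall A B (f : Hom A B), fib f -> we f -> fib (fmap F f) /\ we (fmap F f)) /\
  (forall P X Y Z (p1 : Hom P X) (p2 : Hom P Y) (p : Hom X Z) (g : Hom Y Z),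
      is_pullback p1 p2 p g -> fib p ->
      is_pullback (fmap F p1) (fmap F p2) (fmap F p) (fmap F g)) /\
  is_terminal (F (term C)).

(** * Homotopy: equality in Ho C, the localization of C at the weak
    equivalences.  Two parallel maps are equal in the localization iff they
    are identified by every functor inverting the weak equivalences
    (universal property of the localization functor C -> Ho C). *)
Definition homotopic (C : FibCat) (A B : C) (f g : Hom A B) : Prop :=
  forall (E : Category) (H : Functor C E),
    (forall X Y (w : Hom X Y), we w -> is_iso (fmap H w)) ->
    fmap H f = fmap H g.

(* Main.v *)
Require Import Defs.

Definition fcomp (C D E : Category) (F : Functor C D) (H : Functor D E) : Functor C E.
Proof.
  refine {| fobj := fun X => H (F X); fmap := fun A B f => fmap H (fmap F f) |}.
  - intros A. rewrite !fmap_id. reflexivity.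
  - intros A B E0 f g. rewrite !fmap_comp. reflexivity.
Defined.

Lemma pb_swap (C : Category) (P X Y Z : C) (p1 : Hom P X) (p2 : Hom P Y) (f : Hom X Z) (g : Hom Y Z) :
  is_pullback p1 p2 f g -> is_pullback p2 p1 g f.
Proof.
  intros [Hc Hu]. split; [symmetry; exact Hc|].
  intros Q a b Hab. destruct (Hu Q b a (eq_sym Hab)) as [u [[H1 H2] H3]].
  exists u. split; [split; assumption|].
  intros v [V1 V2]. apply H3. split; assumption.
Qed.

Lemma two3_left (C : FibCat) (X Y Z : C) (f : Hom X Y) (h : Hom Y Z) :
  we f -> we (comp h f) -> we h.
Proof.
  intros Hf Hhf.
  destruct (@we_2of6 C X X Y Z (idm X) f h) as [_ [_ [Hh _]]]; auto.
  rewrite comp_idr. exact Hf.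
Qed.

Lemma two3_sect (C : FibCat) (X Y : C) (j : Hom X Y) (a : Hom Y X) :
  we a -> comp a j = idm X -> we j.
Proof.
  intros Ha E.
  destruct (@we_2of6 C X Y X X j a (idm X)) as [Hj _]; auto.
  - rewrite E. apply we_id.
  - rewrite comp_idl. exact Ha.
Qed.

Lemma ken_brown (C D : FibCat) (F : Functor C D) (hF : exact F)
  (X Y : C) (w : Hom X Y) : we w -> we (fmap F w).
Proof.
  intros Hw.
  destruct hF as [hfib [hafib _]].
  destruct (@term_terminal C X) as [uX _].
  destruct (@term_terminal C Y) as [uY _].
  destruct (@pullback_exists C _ _ _ uY uX (all_fibrant uY)) as [P [q1 [q2 Hpb]]].
  assert (Fq2 : fib q2) by (eapply fib_pullback; [exact Hpb| apply all_fibrant]).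
  assert (Fq1 : fib q1) by (eapply fib_pullback; [apply pb_swap; exact Hpb| apply all_fibrant]).
  destruct Hpb as [_ Hu].
  assert (Ec : comp uY w = comp uX (idm X)).
  { destruct (@term_terminal C X) as [u Hu']. rewrite (Hu' (comp uY w)), (Hu' (comp uX (idm X))). reflexivity. }
  destruct (Hu X w (idm X) Ec) as [pr [[P1 P2] _]].
  destruct (factorization pr) as [Z [j [p [Hj [Hp Ejp]]]]].
  assert (E2 : comp (comp q2 p) j = idm X) by (rewrite <- comp_assoc, Ejp; exact P2).
  assert (E1 : comp (comp q1 p) j = w) by (rewrite <- comp_assoc, Ejp; exact P1).
  assert (W2 : we (comp q2 p)) by (apply (@two3_left C _ _ _ _ _ Hj); rewrite E2; apply we_id).
  assert (W1 : we (comp q1 p)) by (apply (@two3_left C _ _ _ _ _ Hj); rewrite E1; exact Hw).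
  destruct (hafib _ _ _ (fib_comp Hp Fq2) W2) as [_ FW2].
  destruct (hafib _ _ _ (fib_comp Hp Fq1) W1) as [_ FW1].
  assert (FJ : we (fmap F j)).
  { apply (@two3_sect D _ _ _ _ FW2). rewrite <- fmap_comp, E2. apply fmap_id. }
  rewrite <- E1, fmap_comp. apply we_comp; assumption.
Qed.

Theorem lemma4p4 (C D : FibCat) (F : Functor C D) (G : Functor D C)
  (adj : Adjunction F G) (hF : exact F) (hG : exact G)
  (A : C) (B : D) (f g : Hom A (G B)) :
  homotopic f g -> homotopic (transp adj f) (transp adj g).
Proof.
  intros Hfg E H HH.
  assert (Ht : forall h : Hom A (G B),
    transp adj h = comp (transp adj (idm (G B))) (fmap F h)).
  { intros h.
    pose proof (untransp_natural adj h (transp adj (idm (G B))) (idm B)) as N.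
    rewrite transpK, fmap_id, !comp_idl in N.
    transitivity (transp adj (untransp adj (comp (transp adj (idm (G B))) (fmap F h)))); [rewrite N; reflexivity| apply untranspK]. }
  rewrite (Ht f), (Ht g), !fmap_comp.
  f_equal.
  exact (Hfg E (@fcomp C D E F H) (fun X Y w Hw => HH _ _ _ (@ken_brown C D F hF _ _ _ Hw))).
Qed.
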